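(* Let $t\ge 1$ and $n=t+1$. The gadget $\mathtt{SecCondAdd}$ defined below is $t$-SNI secure. $\mathtt{SecCondAdd}$ takes as input Boolean sharings $(\mathbf{x}_i)_{1\le i\le n}$ and $(\mathbf{y}_i)_{1\le i\le n}$ of vectors $\mathbf{x},\mathbf{y}\in\mathbb{F}_q^l$ and a Boolean sharing $(b_i)_{1\le i\le n}$ of a bit $b\in\{0,1\}$, and outputs a Boolean sharing $(\mathbf{s}_i)$ of $\mathbf{s}=\mathbf{x}+b\cdot\mathbf{y}$, computed as follows: for $j=1,\dots,l$: 1. $(\mathbf{a}[j]_i) := \mathtt{SecAND}((\mathbf{y}[j]_i),(b_i^{[w:1]}))$, where $b_i^{[w:1]}$ denotes the $w$-bit word (with $w=\lceil\log_2 q\rceil$) obtained by replicating the bit $b_i$ to all $w$ bit positions; 2. $(\mathbf{s}[j]_i) := (\mathbf{x}[j]_i+\mathbf{a}[j]_i)$ (share-wise addition); 3. $(\mathbf{s}[j]_i) := \mathtt{StrongRefresh}((\mathbf{s}[j]_i))$. Return $(\mathbf{s}_i)$.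
   Context: Field elements of $\mathbb{F}_q$ are represented as $w$-bit words, $w=\lceil\log_2 q\rceil$. A Boolean sharing of $x$ is a tuple $(x_1,\dots,x_n)$ with $x=x_1+\cdots+x_n$ where $+$ is the (bitwise XOR) addition; sharings of vectors are coordinate-wise, and $\mathbf{v}[j]$ is the $j$-th coordinate of $\mathbf{v}$. $\mathtt{SecAND}$ is a masked bitwise AND gadget on Boolean sharings (the instance over $\mathrm{GF}(2)$ of the ISW masked multiplication $\mathtt{SecMult}$), which is $t$-SNI. $\mathtt{StrongRefresh}((x_i))$: set $y_i:=x_i$; for $i=1,\dots,n$ and $j=i+1,\dots,n$: sample $r$ uniformly from $\mathbb{F}_q$, set $y_i:=y_i+r$, $y_j:=y_j-r$; return $(y_i)$ (this gadget is $t$-SNI). Probing model: an adversary may place probes on intermediate values (internal wires) of a gadget and on its output shares. A gadget with one output sharing and some input sharings is $t$-NI (resp. $t$-SNI) secure if any set of at most $t_1$ probes on internal wires and $t_2$ probes on output shares, with $t_1+t_2\le t$, can be perfectly simulated using at most $t_1+t_2$ (resp. $t_1$) shares of each of its input sharings. *)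

(* Defs.v *)
From mathcomp Require Import all_boot.
Set Implicit Arguments. Unset Strict Implicit. Unset Printing Implicit Defensive.

(* w-bit words with bitwise XOR (the Boolean-sharing addition) and AND *)
Definition word (w : nat) := {ffun 'I_w -> bool}.

Section Words.
Variable w : nat.
Definition wzero : word w := [ffun _ => false].
Definition wxor (u v : word w) : word w := [ffun k => u k (+) v k].
Definition wand (u v : word w) : word w := [ffun k => u k && v k].
Definition wrep (b : bool) : word w := [ffun _ => b].
Definition wval (u : word w) : nat := \sum_(k < w) u k * 2 ^ k.
End Words.

Definition wlen (q : nat) : nat := up_log 2 q.

Section Gadget.
Variables (n w l : nat).
Local Notation W := (word w).

Definition upd (c : {ffun 'I_n -> W}) (i : 'I_n) (v : W) : {ffun 'I_n -> W} :=
  [ffun k => if k == i then v else c k].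

(* pairs (i,j) with i < j, in the loop order  for i, for j = i+1..n *)
Definition pairs : seq ('I_n * 'I_n) :=
  [seq p : 'I_n * 'I_n <- [seq (i, j) | i <- enum 'I_n, j <- enum 'I_n] | (val p.1 < val p.2)%N].

(* randomness of one SecAND / one StrongRefresh: one uniform word r_(i,j)
   per pair i < j (entries with i >= j are never used) *)
Definition rnd := {ffun 'I_n * 'I_n -> W}.

(* one inner iteration (i,j) of ISW SecAND; every computed value is a wire *)
Definition and_step (a b : 'I_n -> W) (r : rnd)
    (st : {ffun 'I_n -> W} * seq W) (p : 'I_n * 'I_n) :=
  let: (c, tr) := st in
  let: (i, j) := p in
  let rr := r (i, j) in
  let abij := wand (a i) (b j) in
  let t1 := wxor rr abij in
  let abji := wand (a j) (b i) in
  let rr' := wxor t1 abji in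
  let ci := wxor (c i) rr in
  let c1 := upd c i ci in
  let cj := wxor (c1 j) rr' in
  (upd c1 j cj, tr ++ [:: rr; abij; t1; abji; rr'; ci; cj]).

Definition SecAND (a b : 'I_n -> W) (r : rnd) : {ffun 'I_n -> W} * seq W :=
  foldl (and_step a b r)
        ([ffun i => wand (a i) (b i)], [seq wand (a i) (b i) | i <- enum 'I_n])
        pairs.

Definition ref_step (r : rnd) (st : {ffun 'I_n -> W} * seq W) (p : 'I_n * 'I_n) :=
  let: (y, tr) := st in
  let: (i, j) := p in
  let rr := r (i, j) in
  let yi := wxor (y i) rr in
  let y1 := upd y i yi in
  let yj := wxor (y1 j) rr in
  (upd y1 j yj, tr ++ [:: rr; yi; yj]).

Definition StrongRefresh (x : {ffun 'I_n -> W}) (r : rnd) :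
    {ffun 'I_n -> W} * seq W :=
  foldl (ref_step r) (x, [::]) pairs.

(* inputs of SecCondAdd: share i of x (a vector in W^l), share i of y,
   share i of the bit b *)
Definition vec := {ffun 'I_l -> W}.
Definition inputs := ({ffun 'I_n -> vec} * {ffun 'I_n -> vec} * {ffun 'I_n -> bool})%type.
(* the gadget's randomness: for each coordinate j, one SecAND and one
   StrongRefresh randomness; it is drawn uniformly from this finite type *)
Definition grnd := {ffun 'I_l -> rnd * rnd}.

Definition coord (inp : inputs) (rho : grnd) (j : 'I_l) :
    {ffun 'I_n -> W} * seq W :=
  let: (xs, ys, bs) := inp in
  let bw := [seq wrep w (bs i) | i <- enum 'I_n] in
  let: (a, trA) := SecAND (fun i => ys i j) (fun i => wrep w (bs i)) (rho j).1 in
  let s := [ffun i => wxor (xs i j) (a i)] in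
  let: (s', trR) := StrongRefresh s (rho j).2 in
  (s', bw ++ trA ++ [seq s i | i <- enum 'I_n] ++ trR).

Definition SecCondAdd_out (inp : inputs) (rho : grnd) : {ffun 'I_n -> vec} :=
  [ffun i => [ffun j => (coord inp rho j).1 i]].

Definition SecCondAdd_wires (inp : inputs) (rho : grnd) : seq W :=
  flatten [seq (coord inp rho j).2 | j <- enum 'I_l].

(* what the adversary sees: internal probes P (positions in the wire
   list) and output probes O (indices of output shares) *)
Definition observe (P : seq nat) (O : seq 'I_n) (inp : inputs) (rho : grnd)
    : seq W * seq vec :=
  ([seq nth (wzero w) (SecCondAdd_wires inp rho) p | p <- P],
   [seq SecCondAdd_out inp rho i | i <- O]).

Definition agree (Ix Iy Ib : {set 'I_n}) (i1 i2 : inputs) : Prop :=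
  let: (x1, y1, b1) := i1 in let: (x2, y2, b2) := i2 in
  [/\ forall i, i \in Ix -> x1 i = x2 i,
      forall i, i \in Iy -> y1 i = y2 i &
      forall i, i \in Ib -> b1 i = b2 i].

End Gadget.

(* decoding of a Boolean sharing of a vector, and validity as F_q^l *)
Definition decode (n w l : nat) (xs : {ffun 'I_n -> vec w l}) (j : 'I_l) : word w :=
  \big[@wxor w/wzero w]_(i < n) xs i j.

Definition valid_input (n q l : nat) (inp : inputs n (wlen q) l) : Prop :=
  let: (xs, ys, _) := inp in
  forall j : 'I_l, (wval (decode xs j) < q)%N /\ (wval (decode ys j) < q)%N.

(* t-SNI of SecCondAdd with n shares over F_q, vectors of length l:
   for every t1 internal probes and t2 output probes with t1 + t2 <= t,
   there are sets of at most t1 share indices of each input sharing and a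
   (randomized, uniform over a nonempty finite type) simulator depending on
   the inputs only through those shares, whose output distribution equals
   the distribution of the probed values for every valid input. *)
Definition SecCondAdd_SNI (t n q l : nat) : Prop :=
  forall (P : seq nat) (O : seq 'I_n), (size P + size O <= t)%N ->
  exists (Ix Iy Ib : {set 'I_n}),
    [/\ (#|Ix| <= size P)%N, (#|Iy| <= size P)%N & (#|Ib| <= size P)%N] /\
  exists (S : finType)
         (sim : inputs n (wlen q) l -> S -> seq (word (wlen q)) * seq (vec (wlen q) l)),
    [/\ (0 < #|S|)%N,
        (forall i1 i2, agree Ix Iy Ib i1 i2 -> forall s, sim i1 s = sim i2 s) &
        forall inp, @valid_input n q l inp ->
        forall v,
          (#|[pred rho : grnd n (wlen q) l | observe P O inp rho == v]| * #|S|
           = #|[pred s : S | sim inp s == v]| * #|{: grnd n (wlen q) l}|)%N].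

(* Main.v *)
Require Import Defs.
From mathcomp Require Import all_boot zify.
Set Implicit Arguments. Unset Strict Implicit. Unset Printing Implicit Defensive.

Ltac bdestr :=
  repeat match goal with |- context [@fun_of_fin ?A ?B ?ph ?f ?v] =>
    let e := constr:(@fun_of_fin A B ph f v) in
    let T := type of e in unify T bool; destruct e end.

Ltac wsolve := apply/ffunP => ?; rewrite ?ffunE /=; bdestr; reflexivity.

Section W.
Variable w : nat.
Implicit Types u v z : word w.
Lemma wxorC u v : wxor u v = wxor v u. Proof. by wsolve. Qed.
Lemma wxorA u v z : wxor u (wxor v z) = wxor (wxor u v) z. Proof. wsolve. Qed.
Lemma wxor0 u : wxor u (wzero w) = u. Proof. wsolve. Qed.
Lemma wxorK u v : wxor (wxor u v) v = u. Proof. wsolve. Qed.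

End W.

Section Fold.
Variables (C T Pt : Type) (f : C -> Pt -> C) (g : C -> Pt -> seq T) (K : nat).
Hypothesis HK : forall c p, size (g c p) = K.
Definition fstep (st : C * seq T) p := (f st.1 p, st.2 ++ g st.1 p).

Lemma fold1 c tr s : (foldl fstep (c,tr) s).1 = foldl f c s.
Proof. by elim: s c tr => //= x s IH c tr; rewrite IH. Qed.

Lemma fold_size c tr s : size (foldl fstep (c,tr) s).2 = size tr + K * size s.
Proof.
elim: s c tr => /= [|x s IH] c tr; first by rewrite muln0 addn0.
by rewrite IH size_cat HK mulnS addnA.
Qed.

Lemma fold_pre d c tr s o : o < size tr -> nth d (foldl fstep (c,tr) s).2 o = nth d tr o.
Proof.
elim: s c tr => //= x s IH c tr Ho.
rewrite IH ?nth_cat ?Ho // size_cat; exact: leq_trans Ho (leq_addr _ _).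
Qed.

Lemma fold_nth d p0 c tr s m k : m < size s -> k < K ->
  nth d (foldl fstep (c,tr) s).2 (size tr + K*m + k)
  = nth d (g (foldl f c (take m s)) (nth p0 s m)) k.
Proof.
elim: s m c tr => //= x s IH [|m] c tr Hm Hk.
  rewrite muln0 addn0 fold_pre; last by rewrite size_cat HK ltn_add2l.
  by rewrite nth_cat ltnNge leq_addr /= addKn.
have -> : size tr + K * m.+1 + k = size (tr ++ g c x) + K * m + k.
  by rewrite size_cat HK mulnS !addnA.
by rewrite IH.
Qed.
End Fold.

Lemma eq_foldl2 (S Pt : Type) (F G : S -> Pt -> S) z s :
  (forall a b, F a b = G a b) -> foldl F z s = foldl G z s.
Proof. by move=> H; elim: s z => //= x s IH z; rewrite H IH. Qed.

Section Gad.
Variables (n w : nat).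
Local Notation W := (word w).
Local Notation pairs := (@pairs n).

Lemma mem_pairs (p : 'I_n * 'I_n) : (p \in pairs) = (val p.1 < val p.2).
Proof.
rewrite /pairs mem_filter; case: p => i j /=.
case: ltnP => //= _.
by apply/allpairsP; exists (i, j); rewrite !mem_enum.
Qed.

Lemma uniq_pairs : uniq pairs.
Proof.
rewrite /pairs filter_uniq // allpairs_uniq ?enum_uniq //.
by move=> [a b] [c d] _ _ [-> ->].
Qed.

Lemma pairs_neq p : p \in pairs -> p.1 != p.2.
Proof. by rewrite mem_pairs => H; apply/eqP => E; rewrite E ltnn in H. Qed.

Definition fA (a b : 'I_n -> W) (r : rnd n w) c p := (and_step a b r (c, [::]) p).1.
Definition gAst (a b : 'I_n -> W) (r : rnd n w) c p := (and_step a b r (c, [::]) p).2.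

Lemma SecAND_fold a b r : SecAND a b r =
  foldl (fstep (fA a b r) (gAst a b r))
    ([ffun i => wand (a i) (b i)], [seq wand (a i) (b i) | i <- enum 'I_n]) pairs.
Proof. by apply: eq_foldl2 => -[c tr] [i j]. Qed.

Lemma size_gA a b r c p : size (gAst a b r c p) = 7. Proof. by case: p. Qed.

Definition fR (r : rnd n w) c p := (ref_step r (c, [::]) p).1.
Definition gR (r : rnd n w) c p := (ref_step r (c, [::]) p).2.

Lemma Ref_fold x r : StrongRefresh x r = foldl (fstep (fR r) (gR r)) (x, [::]) pairs.
Proof. by apply: eq_foldl2 => -[c tr] [i j]. Qed.

Lemma size_gR r c p : size (gR r c p) = 3. Proof. by case: p. Qed.

Definition inc (p : 'I_n * 'I_n) u := (p.1 == u) || (p.2 == u).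

Lemma fRE r c p u : p.1 != p.2 ->
  fR r c p u = if inc p u then wxor (c u) (r p) else c u.
Proof.
case: p => i j /= Hij; rewrite /fR /= !ffunE /inc /=.
rewrite [j == i]eq_sym (negbTE Hij).
case: (eqVneq u j) => [->|Huj]; first by rewrite ?eqxx ?orbT.
rewrite ?orbF.
by case: (eqVneq u i) => [->|Hui]; rewrite ?eqxx ?orbF.
Qed.

Lemma fAE a b r c p u : p.1 != p.2 ->
  fA a b r c p u = if u == p.1 then wxor (c u) (r p)
     else if u == p.2 then wxor (c u) (wxor (wxor (r p) (wand (a p.1) (b p.2))) (wand (a p.2) (b p.1)))
     else c u.
Proof.
case: p => i j /= Hij; rewrite /fA /= !ffunE.
case: (eqVneq u j) => [->|Huj]; first by rewrite eq_sym (negbTE Hij).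
by case: (eqVneq u i) => [->|Hui].
Qed.

Lemma stateA_rel (a1 b1 a2 b2 : 'I_n -> W) (r1 r2 : rnd n w) (V : pred 'I_n) (s : seq ('I_n * 'I_n)) (c1 c2 : {ffun 'I_n -> W}) :
  (forall p, p \in s -> p.1 != p.2) ->
  (forall v, V v -> c1 v = c2 v) ->
  (forall p, p \in s -> V p.1 -> r1 p = r2 p) ->
  (forall p, p \in s -> V p.2 ->
     wxor (wxor (r1 p) (wand (a1 p.1) (b1 p.2))) (wand (a1 p.2) (b1 p.1)) =
     wxor (wxor (r2 p) (wand (a2 p.1) (b2 p.2))) (wand (a2 p.2) (b2 p.1))) ->
  forall v, V v -> foldl (fA a1 b1 r1) c1 s v = foldl (fA a2 b2 r2) c2 s v.
Proof.
elim: s c1 c2 => //= x s IH c1 c2 Hn Hc H2 H3.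
apply: IH; first (by move=> p Hp; apply: Hn; rewrite inE Hp orbT);
  last 2 first.
- by move=> p Hp; apply: H2; rewrite inE Hp orbT.
- by move=> p Hp; apply: H3; rewrite inE Hp orbT.
move=> v Hv; rewrite !fAE ?Hn ?inE ?eqxx //.
case: (eqVneq v x.1) => [E|_]; first by rewrite Hc // H2 ?inE ?eqxx // -E.
case: (eqVneq v x.2) => [E|_]; last exact: Hc.
by rewrite Hc // H3 ?inE ?eqxx // -E.
Qed.

Lemma stateR_rel (r1 r2 : rnd n w) (u : 'I_n) (pe : 'I_n * 'I_n) (s : seq ('I_n * 'I_n)) (c1 c2 : {ffun 'I_n -> W}) :
  uniq s -> (forall p, p \in s -> p.1 != p.2) -> inc pe u ->
  (forall p, p \in s -> inc p u -> p != pe -> r1 p = r2 p) ->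
  foldl (fR r1) c1 s u = wxor (wxor (foldl (fR r2) c2 s u) (wxor (c1 u) (c2 u)))
        (if pe \in s then wxor (r1 pe) (r2 pe) else wzero w).
Proof.
elim: s c1 c2 => [|x s IH] c1 c2 /=; first by move=> *; wsolve.
case/andP=> Hx Hu Hn Hpe H.
rewrite (IH (fR r1 c1 x) (fR r2 c2 x)) //; first last.
- by move=> p Hp; apply: H; rewrite inE Hp orbT.
- by move=> p Hp; apply: Hn; rewrite inE Hp orbT.
rewrite !fRE ?Hn ?inE ?eqxx //.
case: (eqVneq pe x) => [E|Nx] /=.
  rewrite -E in Hx *; rewrite (negbTE Hx) Hpe; wsolve.
case: ifP => Hi; last by [].
rewrite (H x) ?inE ?eqxx // 1?eq_sym //; case: (pe \in s); wsolve.
Qed.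
End Gad.

Set Implicit Arguments. Unset Strict Implicit. Unset Printing Implicit Defensive.

Lemma nth_flat (T I : Type) (d : T) (x0 : I) (F : I -> seq T) (L0 : nat) (s : seq I) j o :
  (forall x, size (F x) = L0) -> o < L0 -> j < size s ->
  nth d (flatten (map F s)) (j * L0 + o) = nth d (F (nth x0 s j)) o.
Proof.
move=> HF Ho; elim: s j => //= x s IH [|j] Hj.
  by rewrite mul0n add0n nth_cat HF Ho.
rewrite nth_cat HF ltnNge mulSn -addnA leq_addr /= addKn IH //.
Qed.

Lemma size_flat (T I : Type) (F : I -> seq T) (L0 : nat) (s : seq I) :
  (forall x, size (F x) = L0) -> size (flatten (map F s)) = size s * L0.
Proof. by move=> HF; elim: s => //= x s IH; rewrite size_cat IH HF mulSn. Qed.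

Section Main.
Variables (t w l : nat).
Local Notation n := t.+1.
Local Notation W := (word w).
Variables (P : seq nat) (O : seq 'I_n).

Definition N := size (@pairs n).
Definition p0 : 'I_n * 'I_n := (ord0, ord0).
Definition edge m := nth p0 (@pairs n) m.
Definition bA := n + n.
Definition bS := n + (n + 7 * N).
Definition bR := bS + n.
Definition L := bR + 3 * N.

Inductive pk := PBw of 'I_n | PInit of 'I_n | PA of nat & nat | PS of 'I_n | PR of nat & nat.

Definition dec o : pk :=
  if o < n then PBw (inord o) else if o < bA then PInit (inord (o - n))
  else if o < bS then PA ((o - bA) %/ 7) ((o - bA) %% 7)
  else if o < bR then PS (inord (o - bS)) else PR ((o - bR) %/ 3) ((o - bR) %% 3).

Inductive dec_spec o : pk -> Prop :=
| DBw of o < n : dec_spec o (PBw (inord o))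
| DInit v of v < n & o = n + v : dec_spec o (PInit (inord v))
| DA m k of m < N & k < 7 & o = n + (n + (7 * m + k)) : dec_spec o (PA m k)
| DS v of v < n & o = n + (n + 7 * N) + v : dec_spec o (PS (inord v))
| DR m k of m < N & k < 3 & o = n + (n + 7 * N) + n + (3 * m + k) : dec_spec o (PR m k).

Lemma decP o : o < L -> dec_spec o (dec o).
Proof.
rewrite /dec /L /bR /bS /bA => HL.
case: ifP => H1; first by constructor.
case: ifP => H2; first by apply: DInit; lia.
case: ifP => H3.
  apply: DA; first (by rewrite ltn_divLR //; lia); first by rewrite ltn_mod.
  have := divn_eq (o - (n + n)) 7; lia.
case: ifP => H4; first by apply: DS; lia.
apply: DR; first (by rewrite ltn_divLR //; lia); first by rewrite ltn_mod.
have := divn_eq (o - (n + (n + 7 * N) + n)) 3; lia.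
Qed.

Lemma L_gt0 : 0 < L. Proof. rewrite /L /bR /bS; lia. Qed.

Definition decq q := dec (q %% L).
Definition posA j m k := j * L + (n + (n + (7 * m + k))).
Definition inPA j m k := posA j m k \in P.

Lemma qdec j o : o < L -> (j * L + o) %% L = o /\ (j * L + o) %/ L = j.
Proof.
move=> Ho; split; first by rewrite modnMDl modn_small.
by rewrite divnMDl ?L_gt0 // divn_small ?addn0.
Qed.

Definition vA m k : option 'I_n :=
  if k == 5 then Some (edge m).1 else if k == 6 then Some (edge m).2 else None.
Definition vR m k : option 'I_n :=
  if k == 1 then Some (edge m).1 else if k == 2 then Some (edge m).2 else None.

Definition gV q := match decq q with
  | PInit v => Some v | PA m k => vA m k | PS v => Some v | PR m k => vR m k | _ => None end.
Definition gJ q := match decq q with PS v => Some v | PR m k => vR m k | _ => None end.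

Definition setg (g : nat -> option 'I_n) := [set v | Some v \in map g P].
Definition Vset := setg gV.
Definition Ix := setg gJ.

Definition rabv j m := let e := edge m in
  if inPA j m 0 then e.2 else if inPA j m 4 then e.1 else if e.1 \in Vset then e.2 else e.1.

Definition crossA q := match decq q with
  | PA m k => let e := edge m in
     if k == 0 then Some e.1 else if k == 1 then Some e.1 else if k == 2 then Some (rabv (q %/ L) m)
     else if k == 3 then Some e.2 else if k == 4 then Some e.2 else None
  | _ => None end.
Definition crossB q := match decq q with
  | PA m k => let e := edge m in
     if k == 0 then Some e.1 else if k == 1 then Some e.2 else if k == 2 then Some (rabv (q %/ L) m)
     else if k == 3 then Some e.1 else if k == 4 then Some e.2 else None
  | _ => None end.
Definition gA q := if gV q is Some v then Some v else crossA q.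
Definition gB q := if gV q is Some v then Some v else
  if decq q is PBw v then Some v else crossB q.
Definition Aset := setg gA.
Definition Bset := setg gB.

Definition hubX q := match decq q with
  | PR m k => if k == 0 then
      (let e := edge m in if e.1 \in O then Some e.2 else if e.2 \in O then Some e.1 else None)
      else None
  | _ => None end.
Definition gX q := if gJ q is Some v then Some v else hubX q.
Definition Xset := [set v | (v \in O) || (Some v \in map gX P)].

Lemma card_setg (g : nat -> option 'I_n) : #|setg g| <= size P.
Proof.
apply: leq_trans (_ : #|pmap id (map g P)| <= _).
  apply: subset_leq_card; apply/subsetP => v; rewrite inE mem_pmap map_id; exact.
apply: leq_trans (card_size _) _; rewrite size_pmap; apply: leq_trans (count_size _ _) _; by rewrite size_map.
Qed.

Lemma card_Xset : #|Xset| <= size O + size P.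
Proof.
apply: leq_trans (_ : #|O ++ pmap id (map gX P)| <= _).
  apply: subset_leq_card; apply/subsetP => v; rewrite !inE mem_cat mem_pmap map_id; exact.
apply: leq_trans (card_size _) _.
rewrite size_cat leq_add2l size_pmap; apply: leq_trans (count_size _ _) _; by rewrite size_map.
Qed.

Lemma setgP (g : nat -> option 'I_n) q v : q \in P -> g q = Some v -> v \in setg g.
Proof. by move=> Hq Hg; rewrite inE -Hg map_f. Qed.

Lemma V_A v : v \in Vset -> v \in Aset.
Proof. by rewrite !inE => /mapP[q Hq E]; apply/mapP; exists q => //; rewrite /gA -E. Qed.
Lemma V_B v : v \in Vset -> v \in Bset.
Proof. by rewrite !inE => /mapP[q Hq E]; apply/mapP; exists q => //; rewrite /gB -E. Qed.


Lemma decq_posA j m k : m < N -> k < 7 -> decq (posA j m k) = PA m k /\ posA j m k %/ L = j.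
Proof.
move=> Hm Hk.
have Ho : n + (n + (7 * m + k)) < L by rewrite /L /bR /bS; lia.
rewrite /decq /posA; have [-> ->] := qdec j Ho; split => //.
rewrite /dec.
have -> : (n + (n + (7 * m + k)) < n) = false by lia.
have -> : (n + (n + (7 * m + k)) < bA) = false by rewrite /bA; lia.
have -> : (n + (n + (7 * m + k)) < bS) = true by rewrite /bS; lia.
have -> : n + (n + (7 * m + k)) - bA = m * 7 + k by rewrite /bA; lia.
by rewrite divnMDl // modnMDl divn_small // modn_small // addn0.
Qed.

Section Facts.
Variables (j m : nat) (Hm : m < N).
Local Notation e1 := (edge m).1.
Local Notation e2 := (edge m).2.

Lemma FA0 : inPA j m 0 -> e1 \in Aset /\ e1 \in Bset.
Proof.
move=> Hq; have [D J] := @decq_posA j m 0 Hm isT.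
have HA := setgP (g := gA) Hq; have HB := setgP (g := gB) Hq; have HV := setgP (g := gV) Hq.
rewrite /gA /gB /gV /crossA /crossB /vA D J /= in HA HB HV.
 split; [exact: HA | exact: HB]. Qed.
Lemma FA1 : inPA j m 1 -> e1 \in Aset /\ e2 \in Bset.
Proof.
move=> Hq; have [D J] := @decq_posA j m 1 Hm isT.
have HA := setgP (g := gA) Hq; have HB := setgP (g := gB) Hq; have HV := setgP (g := gV) Hq.
rewrite /gA /gB /gV /crossA /crossB /vA D J /= in HA HB HV.
 split; [exact: HA | exact: HB]. Qed.
Lemma FA2 : inPA j m 2 -> rabv j m \in Aset /\ rabv j m \in Bset.
Proof.
move=> Hq; have [D J] := @decq_posA j m 2 Hm isT.
have HA := setgP (g := gA) Hq; have HB := setgP (g := gB) Hq; have HV := setgP (g := gV) Hq.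
rewrite /gA /gB /gV /crossA /crossB /vA D J /= in HA HB HV.
 split; [exact: HA | exact: HB]. Qed.
Lemma FA3 : inPA j m 3 -> e2 \in Aset /\ e1 \in Bset.
Proof.
move=> Hq; have [D J] := @decq_posA j m 3 Hm isT.
have HA := setgP (g := gA) Hq; have HB := setgP (g := gB) Hq; have HV := setgP (g := gV) Hq.
rewrite /gA /gB /gV /crossA /crossB /vA D J /= in HA HB HV.
 split; [exact: HA | exact: HB]. Qed.
Lemma FA4 : inPA j m 4 -> e2 \in Aset /\ e2 \in Bset.
Proof.
move=> Hq; have [D J] := @decq_posA j m 4 Hm isT.
have HA := setgP (g := gA) Hq; have HB := setgP (g := gB) Hq; have HV := setgP (g := gV) Hq.
rewrite /gA /gB /gV /crossA /crossB /vA D J /= in HA HB HV.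
 split; [exact: HA | exact: HB]. Qed.
Lemma FA5 : inPA j m 5 -> e1 \in Vset.
Proof.
move=> Hq; have [D J] := @decq_posA j m 5 Hm isT.
have HA := setgP (g := gA) Hq; have HB := setgP (g := gB) Hq; have HV := setgP (g := gV) Hq.
rewrite /gA /gB /gV /crossA /crossB /vA D J /= in HA HB HV.
 exact: HV. Qed.
Lemma FA6 : inPA j m 6 -> e2 \in Vset.
Proof.
move=> Hq; have [D J] := @decq_posA j m 6 Hm isT.
have HA := setgP (g := gA) Hq; have HB := setgP (g := gB) Hq; have HV := setgP (g := gV) Hq.
rewrite /gA /gB /gV /crossA /crossB /vA D J /= in HA HB HV.
 exact: HV. Qed.
End Facts.


Lemma J_V v : v \in Ix -> v \in Vset.
Proof.
by rewrite !inE => /mapP[q Hq E]; apply/mapP; exists q => //; move: E; rewrite /gJ /gV; case: (decq q).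
Qed.
Lemma J_X v : v \in Ix -> v \in Xset.
Proof.
by rewrite !inE => /mapP[q Hq E]; apply/orP; right; apply/mapP; exists q => //; rewrite /gX -E.
Qed.
Lemma gX_X q v : q \in P -> gX q = Some v -> v \in Xset.
Proof. by move=> Hq E; rewrite inE -E map_f ?orbT. Qed.

Lemma O_X v : v \in O -> v \in Xset.
Proof. by rewrite inE => ->. Qed.

Definition radd (r d : rnd n w) : rnd n w := [ffun p => wxor (r p) (d p)].

Lemma szE : size (Finite.enum 'I_n) = n.
Proof. by rewrite -enumT size_enum_ord. Qed.

Lemma nth_catR (T : Type) (d : T) s1 s2 a X : size s1 = a -> nth d (s1 ++ s2) (a + X) = nth d s2 X.
Proof. by move=> <-; rewrite nth_cat ltnNge leq_addr /= addKn. Qed.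
Lemma nth_catL (T : Type) (d : T) s1 s2 X : X < size s1 -> nth d (s1 ++ s2) X = nth d s1 X.
Proof. by move=> H; rewrite nth_cat H. Qed.
Lemma nth_enum_inord o : o < n -> nth ord0 (enum 'I_n) o = inord o.
Proof. by move=> H; apply: val_inj; rewrite /= nth_enum_ord // inordK. Qed.
Lemma nthE o : o < n -> nth ord0 (Finite.enum 'I_n) o = inord o.
Proof. by move=> H; rewrite -enumT nth_enum_inord. Qed.
Lemma index_edge m : m < N -> index (edge m) (@pairs n) = m.
Proof. by move=> H; rewrite /edge index_uniq // uniq_pairs. Qed.
Lemma edge_in m : m < N -> edge m \in @pairs n.
Proof. by move=> H; rewrite /edge mem_nth. Qed.

Lemma size_SecAND (a b : 'I_n -> W) r : size (SecAND a b r).2 = n + 7 * N.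
Proof. by rewrite SecAND_fold (fold_size _ (@size_gA _ _ a b r)) size_map size_enum_ord. Qed.
Lemma size_Ref (x : {ffun 'I_n -> W}) r : size (StrongRefresh x r).2 = 3 * N.
Proof. by rewrite Ref_fold (fold_size _ (@size_gR _ _ r)). Qed.

Lemma SecAND_init (a b : 'I_n -> W) r v : v < n ->
  nth (wzero w) (SecAND a b r).2 v = wand (a (inord v)) (b (inord v)).
Proof.
move=> Hv; rewrite SecAND_fold fold_pre; last by rewrite size_map size_enum_ord.
by rewrite (nth_map ord0) ?size_enum_ord ?szE // nth_enum_inord.
Qed.

Lemma SecAND_nth (a b : 'I_n -> W) r m k : m < N -> k < 7 ->
  nth (wzero w) (SecAND a b r).2 (n + (7 * m + k)) =
  nth (wzero w) (gAst a b r (foldl (fA a b r) [ffun i => wand (a i) (b i)] (take m (@pairs n))) (edge m)) k.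
Proof.
move=> Hm Hk; rewrite SecAND_fold.
have := @fold_nth _ _ _ (fA a b r) (gAst a b r) 7 (@size_gA _ _ a b r) (wzero w) p0
   [ffun i => wand (a i) (b i)] [seq wand (a i) (b i) | i <- enum 'I_n] (@pairs n) m k Hm Hk.
by rewrite size_map size_enum_ord -addnA.
Qed.

Lemma Ref_nth (x : {ffun 'I_n -> W}) r m k : m < N -> k < 3 ->
  nth (wzero w) (StrongRefresh x r).2 (3 * m + k) =
  nth (wzero w) (gR r (foldl (fR r) x (take m (@pairs n))) (edge m)) k.
Proof.
move=> Hm Hk; rewrite Ref_fold.
have := @fold_nth _ _ _ (fR r) (gR r) 3 (@size_gR _ _ r) (wzero w) p0
   x [::] (@pairs n) m k Hm Hk.
by rewrite /= add0n.
Qed.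

Section Rel.
Variables (x1 y1 x2 y2 : {ffun 'I_n -> vec w l}) (b1 b2 : {ffun 'I_n -> bool}).
Hypotheses (Hx : forall i, i \in Ix -> x1 i = x2 i) (Hy : forall i, i \in Aset -> y1 i = y2 i)
  (Hb : forall i, i \in Bset -> b1 i = b2 i).
Variable h : 'I_n.
Hypothesis Hh : h \notin Xset.

Definition a1 (j : 'I_l) i := y1 i j.
Definition a2 (j : 'I_l) i := y2 i j.
Definition bb1 i := wrep w (b1 i).
Definition bb2 i := wrep w (b2 i).
Definition Re1 j (p : 'I_n * 'I_n) := wxor (wand (a1 j p.1) (bb1 p.2)) (wand (a1 j p.2) (bb1 p.1)).
Definition Re2 j (p : 'I_n * 'I_n) := wxor (wand (a2 j p.1) (bb2 p.2)) (wand (a2 j p.2) (bb2 p.1)).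
Definition dA (j : 'I_l) m (p : 'I_n * 'I_n) : W :=
  if p.1 \in Vset then wzero w
  else if p.2 \in Vset then wxor (Re1 j p) (Re2 j p)
  else if inPA j m 2 && ~~ inPA j m 0 && ~~ inPA j m 4 then
     wxor (wand (a1 j p.1) (bb1 p.2)) (wand (a2 j p.1) (bb2 p.2))
  else if inPA j m 4 && ~~ inPA j m 0 && ~~ inPA j m 2 then wxor (Re1 j p) (Re2 j p)
  else wzero w.
Definition dlA j : rnd n w := [ffun p => dA j (index p (@pairs n)) p].

Lemma agA v j : v \in Aset -> a2 j v = a1 j v.
Proof. by move=> H; rewrite /a1 /a2 Hy. Qed.
Lemma agB v : v \in Bset -> bb2 v = bb1 v.
Proof. by move=> H; rewrite /bb1 /bb2 Hb. Qed.

Lemma dlA_V1 j p : p.1 \in Vset -> dlA j p = wzero w.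
Proof. by move=> H; rewrite ffunE /dA H. Qed.

Lemma Re_eq j p : p.1 \in Vset -> p.2 \in Vset -> Re2 j p = Re1 j p.
Proof.
by move=> H1 H2; rewrite /Re2 !agA ?agB ?V_A ?V_B.
Qed.

Lemma H3 j (rA : rnd n w) p : p.2 \in Vset ->
  wxor (wxor (rA p) (wand (a1 j p.1) (bb1 p.2))) (wand (a1 j p.2) (bb1 p.1)) =
  wxor (wxor (radd rA (dlA j) p) (wand (a2 j p.1) (bb2 p.2))) (wand (a2 j p.2) (bb2 p.1)).
Proof.
move=> H2; rewrite ffunE.
case H1: (p.1 \in Vset).
  rewrite dlA_V1 // !agA ?agB ?V_A ?V_B //; wsolve.
rewrite ffunE /dA H1 H2 /Re1 /Re2; wsolve.
Qed.

Definition init1 j : {ffun 'I_n -> W} := [ffun i => wand (a1 j i) (bb1 i)].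
Definition init2 j : {ffun 'I_n -> W} := [ffun i => wand (a2 j i) (bb2 i)].

Lemma stA_eq j (rA : rnd n w) s : (forall p, p \in s -> p \in @pairs n) ->
  forall v, v \in Vset ->
  foldl (fA (a1 j) bb1 rA) (init1 j) s v = foldl (fA (a2 j) bb2 (radd rA (dlA j))) (init2 j) s v.
Proof.
move=> Hs; apply: stateA_rel.
- by move=> p /Hs /pairs_neq.
- by move=> v Hv; rewrite !ffunE agA ?agB ?V_A ?V_B.
- by move=> p _ H1; rewrite ffunE dlA_V1 // wxor0.
- by move=> p _ H2; apply: H3.
Qed.

Definition cA1 j rA := (SecAND (a1 j) bb1 rA).1.
Definition cA2 j rA := (SecAND (a2 j) bb2 rA).1.

Lemma cA_eq j rA v : v \in Vset -> cA1 j rA v = cA2 j (radd rA (dlA j)) v.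
Proof.
move=> Hv; rewrite /cA1 /cA2 !SecAND_fold !fold1.
by apply: stA_eq.
Qed.

Definition sv1 j rA : {ffun 'I_n -> W} := [ffun i => wxor (x1 i j) (cA1 j rA i)].
Definition sv2 j rA : {ffun 'I_n -> W} := [ffun i => wxor (x2 i j) (cA2 j rA i)].
Definition dd j rA i := wxor (sv1 j rA i) (sv2 j (radd rA (dlA j)) i).
Definition dlR j rA : rnd n w := [ffun p =>
  if p.2 == h then (if p.1 \in O then dd j rA p.1 else wzero w)
  else if p.1 == h then (if p.2 \in O then dd j rA p.2 else wzero w) else wzero w].

Lemma sv_eq j rA v : v \in Ix -> sv1 j rA v = sv2 j (radd rA (dlA j)) v.
Proof. by move=> Hv; rewrite !ffunE Hx // cA_eq // J_V. Qed.

Lemma dd0 j rA v : v \in Ix -> dd j rA v = wzero w.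
Proof. move=> Hv; rewrite /dd sv_eq //; wsolve. Qed.

Lemma neq_h v : v \in Xset -> v != h.
Proof. by move=> Hv; apply/eqP => E; move: Hh; rewrite -E Hv. Qed.

Lemma dlR0 j rA u p : u != h -> dd j rA u = wzero w -> inc p u -> dlR j rA p = wzero w.
Proof.
move=> Hu Hd; rewrite /inc ffunE.
case/orP => /eqP E; subst u.
  by rewrite (negbTE Hu); case: ifP => // _; case: ifP.
case: ifP => [/eqP E|_]; first by rewrite E eqxx in Hu.
by case: ifP => // _; case: ifP.
Qed.

Definition phi (rho : grnd n w l) : grnd n w l :=
  [ffun j => (radd (rho j).1 (dlA j), radd (rho j).2 (dlR j (rho j).1))].

Lemma radd_inj d : injective (fun r => radd r d).
Proof.
move=> r r' E; apply/ffunP => p; have := congr1 (fun f : rnd n w => f p) E.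
rewrite !ffunE => E'; by rewrite -(wxorK (r p) (d p)) E' wxorK.
Qed.

Lemma phi_inj : injective phi.
Proof.
move=> r r' E; apply/ffunP => j; have := congr1 (fun f : grnd n w l => f j) E.
rewrite !ffunE => -[E1 E2].
have E1' := radd_inj E1.
rewrite E1' in E2; have E2' := radd_inj E2.
by case: (r j) (r' j) E1' E2' => ? ? [? ?] /= -> ->.
Qed.


Lemma coordE1 (rho : grnd n w l) j :
  coord (x1, y1, b1) rho j =
  ((StrongRefresh (sv1 j (rho j).1) (rho j).2).1,
   [seq bb1 i | i <- enum 'I_n] ++ (SecAND (a1 j) bb1 (rho j).1).2 ++
   [seq sv1 j (rho j).1 i | i <- enum 'I_n] ++ (StrongRefresh (sv1 j (rho j).1) (rho j).2).2).
Proof.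
rewrite /coord /sv1 /cA1 /a1 /bb1 /=.
case: (SecAND _ _ _) => c tr /=.
by case: (StrongRefresh _ _) => y tr' /=.
Qed.

Lemma coordE2 (rho : grnd n w l) j :
  coord (x2, y2, b2) rho j =
  ((StrongRefresh (sv2 j (rho j).1) (rho j).2).1,
   [seq bb2 i | i <- enum 'I_n] ++ (SecAND (a2 j) bb2 (rho j).1).2 ++
   [seq sv2 j (rho j).1 i | i <- enum 'I_n] ++ (StrongRefresh (sv2 j (rho j).1) (rho j).2).2).
Proof.
rewrite /coord /sv2 /cA2 /a2 /bb2 /=.
case: (SecAND _ _ _) => c tr /=.
by case: (StrongRefresh _ _) => y tr' /=.
Qed.

Definition pe (i : 'I_n) : 'I_n * 'I_n := if val i < val h then (i, h) else (h, i).

Lemma out_eq rho i : i \in O ->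
  SecCondAdd_out (x1, y1, b1) rho i = SecCondAdd_out (x2, y2, b2) (phi rho) i.
Proof.
move=> Hi; have Hih := neq_h (O_X Hi).
have Hpe : pe i \in @pairs n.
  rewrite mem_pairs /pe; case: (ltnP i h) => //= H.
  by rewrite ltn_neqAle H andbT; apply: contra Hih => /eqP E; apply/eqP/val_inj.
have Hinc : inc (pe i) i by rewrite /pe /inc; case: ifP => _ /=; rewrite eqxx ?orbT.
rewrite !ffunE; apply/ffunP => j; rewrite !ffunE coordE1 coordE2 /= !ffunE /=.
rewrite !Ref_fold !fold1.
set rA := (rho j).1; set rR := (rho j).2.
rewrite (@stateR_rel _ _ rR (radd rR (dlR j rA)) i (pe i) _ _ (sv2 j (radd rA (dlA j)))) ?uniq_pairs //; first last.
- move=> p Hp Hpi Hne; rewrite !ffunE.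
  have Hp' := Hp; rewrite mem_pairs in Hp'.
  case: ifP => [/eqP E2|_].
    case: ifP => _; last by rewrite wxor0.
    move: Hpi Hne; rewrite /inc E2 [h == i]eq_sym (negbTE Hih) orbF => /eqP E1.
    rewrite /pe; move: Hp' Hp; case: p E1 E2 => a b /= -> -> Hp' Hp.
    by rewrite Hp' eqxx.
  case: ifP => [/eqP E1|_]; last by rewrite wxor0.
  case: ifP => _; last by rewrite wxor0.
  move: Hpi Hne; rewrite /inc E1 [h == i]eq_sym (negbTE Hih) /= => /eqP E2.
  rewrite /pe; move: Hp' Hp; case: p E1 E2 => a b /= -> -> Hp' Hp.
  by rewrite ltnNge (ltnW Hp') eqxx.
- by move=> p /pairs_neq.
rewrite Hpe !ffunE.
have -> : (if (pe i).2 == h then (if (pe i).1 \in O then dd j rA (pe i).1 else wzero w)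
      else if (pe i).1 == h then (if (pe i).2 \in O then dd j rA (pe i).2 else wzero w)
      else wzero w) = dd j rA i.
  rewrite /pe; case: (val i < val h) => /=; first by rewrite eqxx Hi.
  by rewrite (negbTE Hih) eqxx Hi.
rewrite /dd; wsolve.
Qed.

Ltac spec_all := repeat match goal with
  | H : is_true true -> _ |- _ => specialize (H isT)
  | H : is_true false -> _ |- _ => clear H
  | H : _ /\ _ |- _ => destruct H end.

Lemma wire_eq (rho : grnd n w l) (j : 'I_l) o : o < L -> (j * L + o) \in P ->
  nth (wzero w) (coord (x1, y1, b1) rho j).2 o = nth (wzero w) (coord (x2, y2, b2) (phi rho) j).2 o.
Proof.
move=> Ho Hq.
have [Dq Jq] := qdec j Ho.
have Dq' : decq (j * L + o) = dec o by rewrite /decq Dq.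
rewrite coordE1 coordE2 /= ffunE /=.
set rA := (rho j).1; set rR := (rho j).2.
move: Hq Dq' Jq.
case: (decP Ho) => [Hn | v Hv -> | m k Hm Hk -> | v Hv -> | m k Hm Hk ->] Hq Dq' Jq.
-
  rewrite !nth_catL ?size_map ?size_enum_ord ?szE // !(nth_map ord0) ?size_enum_ord ?szE //.
  rewrite ?nth_enum_inord ?nthE // agB //.
  by apply: (setgP (g := gB) Hq); rewrite /gB /gV Dq'.
-
  rewrite !nth_catR ?size_map ?size_enum_ord ?szE //.
  rewrite !nth_catL ?size_SecAND; try lia.
  rewrite !SecAND_init //.
  have Hv' : inord v \in Vset by apply: (setgP (g := gV) Hq); rewrite /gV Dq'.
  by rewrite agA ?agB ?V_A ?V_B.
-
  rewrite (@nth_catR _ _ [seq bb1 i | i <- enum 'I_n]) ?size_map ?size_enum_ord ?szE //.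
  rewrite (@nth_catR _ _ [seq bb2 i | i <- enum 'I_n]) ?size_map ?size_enum_ord ?szE //.
  rewrite !nth_catL ?size_SecAND; try lia.
  rewrite !SecAND_nth //.
  have Hin := edge_in Hm; have Hneq := pairs_neq Hin; have Hidx := index_edge Hm.
  have Hc := @stA_eq j rA (take m (@pairs n)) (fun p Hp => mem_take Hp).
  have F0 := @FA0 j m Hm; have F1 := @FA1 j m Hm; have F2 := @FA2 j m Hm.
  have F3 := @FA3 j m Hm; have F4 := @FA4 j m Hm; have F5 := @FA5 j m Hm; have F6 := @FA6 j m Hm.
  have Hq' : inPA j m k := Hq.
  have FV1 : (edge m).1 \in Vset -> (edge m).1 \in Aset /\ (edge m).1 \in Bset.
    by move=> H; split; [apply: V_A | apply: V_B].
  have FV2 : (edge m).2 \in Vset -> (edge m).2 \in Aset /\ (edge m).2 \in Bset.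
    by move=> H; split; [apply: V_A | apply: V_B].
  move: Hq' F0 F1 F2 F3 F4 F5 F6 FV1 FV2 Hidx Hneq.
  rewrite /rabv /gAst.
  case E: (edge m) => [e1 e2] /=.
  case: k Hk Hq Dq' Jq => [|[|[|[|[|[|[|k]]]]]]] Hk Hq Dq' Jq //=.
  + (* r *)
    move=> Hq' F0 F1 F2 F3 F4 F5 F6 FV1 FV2 Hidx Hneq.
    rewrite !ffunE Hidx /dA /=.
    move: Hq' F0 F2 F4 FV1 FV2.
    case V1: (e1 \in Vset); case V2: (e2 \in Vset);
    case R0: (inPA j m 0); case R2: (inPA j m 2); case R4: (inPA j m 4); rewrite /= ?wxor0 //;
    move=> *; spec_all; rewrite /Re1 /Re2 /a1 /a2 /bb1 /bb2 /=;
    try (rewrite -(@Hy e1); last by []); try (rewrite -(@Hy e2); last by []);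
    try (rewrite -(@Hb e1); last by []); try (rewrite -(@Hb e2); last by []); wsolve.
  + (* ab *)
    move=> Hq' F0 F1 *; have [HA1 HB2] := F1 Hq'.
    by rewrite agA ?agB.
  + (* r + ab *)
    move=> Hq' F0 F1 F2 F3 F4 F5 F6 FV1 FV2 Hidx Hneq.
    rewrite !ffunE Hidx /dA /=.
    move: Hq' F0 F2 F4 FV1 FV2.
    case V1: (e1 \in Vset); case V2: (e2 \in Vset);
    case R0: (inPA j m 0); case R2: (inPA j m 2); case R4: (inPA j m 4); rewrite /= //;
    move=> *; spec_all; rewrite /Re1 /Re2 /a1 /a2 /bb1 /bb2 /=;
    try (rewrite -(@Hy e1); last by []); try (rewrite -(@Hy e2); last by []);
    try (rewrite -(@Hb e1); last by []); try (rewrite -(@Hb e2); last by []); wsolve.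
  + (* ab' *)
    move=> Hq' F0 F1 F2 F3 *; have [HA2 HB1] := F3 Hq'.
    by rewrite agA ?agB.
  + (* R *)
    move=> Hq' F0 F1 F2 F3 F4 F5 F6 FV1 FV2 Hidx Hneq.
    rewrite !ffunE Hidx /dA /=.
    move: Hq' F0 F2 F4 FV1 FV2.
    case V1: (e1 \in Vset); case V2: (e2 \in Vset);
    case R0: (inPA j m 0); case R2: (inPA j m 2); case R4: (inPA j m 4); rewrite /= //;
    move=> *; spec_all; rewrite /Re1 /Re2 /a1 /a2 /bb1 /bb2 /=;
    try (rewrite -(@Hy e1); last by []); try (rewrite -(@Hy e2); last by []);
    try (rewrite -(@Hb e1); last by []); try (rewrite -(@Hb e2); last by []); wsolve.
  + (* c_i partial *)
    move=> Hq' F0 F1 F2 F3 F4 F5 F6 FV1 FV2 Hidx Hneq.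
    have HV1 := F5 Hq'.
    by rewrite Hc // [radd _ _ _]ffunE dlA_V1 // wxor0.
  + (* c_j partial *)
    move=> Hq' F0 F1 F2 F3 F4 F5 F6 FV1 FV2 Hidx Hneq.
    have HV2 := F6 Hq'.
    rewrite (H3 j rA (p := (e1, e2))) //.
    by rewrite !ffunE [e2 == e1]eq_sym (negbTE Hneq) Hc.
-
  rewrite -addnA !nth_catR ?size_map ?size_enum_ord ?szE ?size_SecAND // !nth_catL ?size_map ?size_enum_ord ?szE //.
  rewrite !(nth_map ord0) ?size_enum_ord ?szE // ?nthE //.
  by apply: sv_eq; apply: (setgP (g := gJ) Hq); rewrite /gJ Dq'.
-
  have Eo : n + (n + 7 * N) + n + (3 * m + k) = n + ((n + 7 * N) + (n + (3 * m + k))) by rewrite !addnA.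
  rewrite Eo !nth_catR ?size_map ?size_enum_ord ?szE ?size_SecAND // !Ref_nth //; clear Eo.
  have Hin := edge_in Hm; have Hneq := pairs_neq Hin.
  have Hs : uniq (take m (@pairs n)) by rewrite take_uniq ?uniq_pairs.
  have Hsn : forall p, p \in take m (@pairs n) -> p.1 != p.2 by move=> p /mem_take /pairs_neq.
  move: Hq Dq' Jq Hneq; rewrite /gR.
  case E: (edge m) => [e1 e2] /= Hq Dq' Jq Hneq.
  case: k Hk Hq Dq' Jq => [|[|[|k]]] Hk Hq Dq' Jq //=.
  + (* r *)
    rewrite !ffunE /=.
    have HXv v : (if e1 \in O then Some e2 else if e2 \in O then Some e1 else None) = Some v -> v \in Xset.
      by move=> Hv; apply: (gX_X Hq); rewrite /gX /gJ /hubX /vR Dq' /= E.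
    suff -> : (if e2 == h then (if e1 \in O then dd j rA e1 else wzero w)
       else if e1 == h then (if e2 \in O then dd j rA e2 else wzero w) else wzero w) = wzero w.
      by rewrite wxor0.
    case O1: (e1 \in O).
      have H2 := neq_h (HXv e2 ltac:(by rewrite O1)); have H1 := neq_h (O_X O1).
      by rewrite (negbTE H2) (negbTE H1).
    case: (e2 == h) => //; case: (eqVneq e1 h) => [E1|_] //.
    case O2: (e2 \in O) => //.
    by have := neq_h (HXv e1 ltac:(by rewrite O1 O2)); rewrite E1 eqxx.
  + (* y_i *)
    have HJv : e1 \in Ix by apply: (setgP (g := gJ) Hq); rewrite /gJ /vR Dq' /= E.
    have Hh1 := neq_h (J_X HJv); have Hd := dd0 j rA HJv.
    have Z p : inc p e1 -> dlR j rA p = wzero w := dlR0 Hh1 Hd.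
    rewrite (@stateR_rel _ _ rR (radd rR (dlR j rA)) e1 (e1, e2) _ _ (sv2 j (radd rA (dlA j)))) //;
      first last.
    - by move=> p _ Hp _; rewrite ffunE Z // wxor0.
    - by rewrite /inc eqxx.
    have Ze : dlR j rA (e1, e2) = wzero w by apply: Z; rewrite /inc eqxx.
    rewrite (@sv_eq j rA _ HJv) ![radd _ _ _]ffunE Ze.
    case: (_ \in _); wsolve.
  + (* y_j *)
    have HJv : e2 \in Ix by apply: (setgP (g := gJ) Hq); rewrite /gJ /vR Dq' /= E.
    have Hh1 := neq_h (J_X HJv); have Hd := dd0 j rA HJv.
    have Z p : inc p e2 -> dlR j rA p = wzero w := dlR0 Hh1 Hd.
    rewrite /upd ![[ffun _ => _] e2]ffunE [e2 == e1]eq_sym (negbTE Hneq).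
    rewrite (@stateR_rel _ _ rR (radd rR (dlR j rA)) e2 (e1, e2) _ _ (sv2 j (radd rA (dlA j)))) //;
      first last.
    - by move=> p _ Hp _; rewrite ffunE Z // wxor0.
    - by rewrite /inc eqxx orbT.
    have Ze : dlR j rA (e1, e2) = wzero w by apply: Z; rewrite /inc eqxx orbT.
    rewrite (@sv_eq j rA _ HJv) ![radd _ _ _]ffunE Ze.
    case: (_ \in _); wsolve.
Qed.

Lemma size_coord1 rho (j : 'I_l) : size (coord (x1, y1, b1) rho j).2 = L.
Proof.
rewrite coordE1 /= !size_cat !size_map size_SecAND size_Ref ?size_enum_ord ?szE.
rewrite /L /bR /bS; lia.
Qed.
Lemma size_coord2 rho (j : 'I_l) : size (coord (x2, y2, b2) rho j).2 = L.
Proof.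
rewrite coordE2 /= !size_cat !size_map size_SecAND size_Ref ?size_enum_ord ?szE.
rewrite /L /bR /bS; lia.
Qed.

Lemma obs_eq rho : observe P O (x1, y1, b1) rho = observe P O (x2, y2, b2) (phi rho).
Proof.
rewrite /observe; congr pair; apply/eq_in_map => q Hq; last exact: out_eq.
rewrite /SecCondAdd_wires.
case: (ltnP q (l * L)) => Hql.
  have Hj : q %/ L < l by rewrite ltn_divLR ?L_gt0.
  have Ho : q %% L < L by rewrite ltn_mod L_gt0.
  have Eq : q = Ordinal Hj * L + q %% L by rewrite /= -divn_eq.
  rewrite Eq in Hq *.
  rewrite !(nth_flat (wzero w) (Ordinal Hj)) ?size_enum_ord ?nth_ord_enum //;
    try (by move=> x; rewrite size_coord1); try (by move=> x; rewrite size_coord2).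
  exact: wire_eq.
have S1 : size (flatten [seq (coord (x1, y1, b1) rho j).2 | j <- enum 'I_l]) = l * L.
  by rewrite (size_flat (L0 := L)) ?size_enum_ord // => x; exact: size_coord1.
have S2 : size (flatten [seq (coord (x2, y2, b2) (phi rho) j).2 | j <- enum 'I_l]) = l * L.
  by rewrite (size_flat (L0 := L)) ?size_enum_ord // => x; exact: size_coord2.
by rewrite !nth_default ?S1 ?S2.
Qed.

Lemma main_count v :
  #|[pred rho | observe P O (x1, y1, b1) rho == v]| = #|[pred rho | observe P O (x2, y2, b2) rho == v]|.
Proof.
have -> : #|[pred rho | observe P O (x1, y1, b1) rho == v]| =
          #|phi @^-1: [set s | observe P O (x2, y2, b2) s == v]|.
  by apply: eq_card => rho; rewrite !inE /= obs_eq.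
by rewrite card_preimset ?cardsE //; exact: phi_inj.
Qed.

End Rel.

End Main.


Definition dx w l : vec w l := [ffun _ => wzero w].
Definition canon t w l (P : seq nat) (inp : inputs t.+1 w l) : inputs t.+1 w l :=
  let: (xs, ys, bs) := inp in
  ([ffun i => if i \in Ix t P then xs i else dx w l],
   [ffun i => if i \in Aset t P then ys i else dx w l],
   [ffun i => if i \in Bset t P then bs i else false]).

Arguments canon : clear implicits.

Lemma canon_eq t w l P (i1 i2 : inputs t.+1 w l) :
  agree (Ix t P) (Aset t P) (Bset t P) i1 i2 -> canon t w l P i1 = canon t w l P i2.
Proof.
case: i1 => [[x1 y1] b1]; case: i2 => [[x2 y2] b2] [H1 H2 H3].
rewrite /canon; congr (_, _, _); apply/ffunP => i; rewrite !ffunE; case: ifP => // Hi.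
- exact: H1.
- exact: H2.
- exact: H3.
Qed.

Unset Implicit Arguments.

Theorem lemma1 (t q l : nat) :
  (1 <= t)%N ->
  (exists p e, [/\ prime p, (0 < e)%N & q = p ^ e]) ->
  SecCondAdd_SNI t t.+1 q l.
Proof.
move=> _ _ P O HPO.
exists (Ix t P), (Aset t P), (Bset t P).
split; first by split; apply: card_setg.
exists (grnd t.+1 (wlen q) l), (fun inp s => observe P O (canon t (wlen q) l P inp) s).
split.
- apply/card_gt0P; by exists [ffun _ => ([ffun _ => wzero _], [ffun _ => wzero _])].
- by move=> i1 i2 Hag s; rewrite (@canon_eq t (wlen q) l P i1 i2 Hag).
- move=> [[x1 y1] b1] _ v.
  have [h Hh] : exists h, h \notin Xset P O.
    case: (pickP (fun h => h \notin Xset P O)) => [h Hh|H]; first by exists h.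
    have : #|Xset P O| = t.+1.
      apply/eqP; rewrite eqn_leq; apply/andP; split.
        by rewrite -[X in _ <= X](card_ord t.+1) max_card.
      rewrite -[X in X <= _](card_ord t.+1); apply: subset_leq_card; apply/subsetP => x _.
      by move: (H x) => /negbFE.
    have := card_Xset P O; lia.
  have Hx : forall i, i \in Ix t P -> x1 i = [ffun i => if i \in Ix t P then x1 i else dx (wlen q) l] i.
    by move=> i Hi; rewrite ffunE Hi.
  have Hy : forall i, i \in Aset t P -> y1 i = [ffun i => if i \in Aset t P then y1 i else dx (wlen q) l] i.
    by move=> i Hi; rewrite ffunE Hi.
  have Hb : forall i, i \in Bset t P -> b1 i = [ffun i => if i \in Bset t P then b1 i else false] i.
    by move=> i Hi; rewrite ffunE Hi.
  by rewrite (main_count Hx Hy Hb Hh v).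
Qed.
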